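(* Let $X\in\mathrm{Alex}^n(0)$ and let $f:X\to\mathbb{R}$ be a Lipschitz continuous affine function with optimal Lipschitz constant $\|f\|$. If there is a unit-speed line $\gamma:\mathbb{R}\to X$ with $\infty>(f\circ\gamma)'=\|f\|>0$, then there is a metric space $Z$ and an isometry $X\cong Z\times\mathbb{R}$ under which $f(z,t)=\|f\|\,t$.
   Context: $\mathrm{Alex}^n(0)$ denotes the class of complete geodesic metric spaces of Hausdorff dimension $n<\infty$ with nonnegative curvature in the sense of Alexandrov. A function is affine if its composition with every geodesic is affine. A unit-speed line is a curve $\gamma:\mathbb{R}\to X$ with $d(\gamma(s),\gamma(t))=|s-t|$ for all $s,t$. *)

(* Defs.v *)
From Stdlib Require Import Reals ClassicalDescription.
Open Scope R_scope.

Definition is_metric {X : Type} (d : X -> X -> R) : Prop :=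
  (forall x y, 0 <= d x y) /\
  (forall x y, d x y = 0 <-> x = y) /\
  (forall x y, d x y = d y x) /\
  (forall x y z, d x z <= d x y + d y z).

Definition cauchy_seq {X : Type} (d : X -> X -> R) (u : nat -> X) : Prop :=
  forall eps, 0 < eps -> exists N, forall m k, (N <= m)%nat -> (N <= k)%nat ->
    d (u m) (u k) < eps.

Definition converges_to {X : Type} (d : X -> X -> R) (u : nat -> X) (l : X) : Prop :=
  forall eps, 0 < eps -> exists N, forall m, (N <= m)%nat -> d (u m) l < eps.

Definition complete {X : Type} (d : X -> X -> R) : Prop :=
  forall u, cauchy_seq d u -> exists l, converges_to d u l.

Definition unit_geodesic_on {X : Type} (d : X -> X -> R) (g : R -> X) (a b : R) : Prop :=
  a <= b /\ forall s t, a <= s <= b -> a <= t <= b -> d (g s) (g t) = Rabs (s - t).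

Definition geodesic_space {X : Type} (d : X -> X -> R) : Prop :=
  forall x y, exists g : R -> X,
    g 0 = x /\ g (d x y) = y /\ unit_geodesic_on d g 0 (d x y).

(** Nonnegative curvature in the sense of Alexandrov (triangle comparison with
    the Euclidean plane, point-on-side form): for every geodesic [g] from [y]
    to [z] of length [L = d y z] and every [x], [t] in [0,L],
    L d(x,g t)^2 >= (L-t) d(x,y)^2 + t d(x,z)^2 - t (L-t) L. *)
Definition nonneg_curv {X : Type} (d : X -> X -> R) : Prop :=
  forall (x y z : X) (g : R -> X),
    g 0 = y -> g (d y z) = z -> unit_geodesic_on d g 0 (d y z) ->
    forall t, 0 <= t <= d y z ->
      (d y z - t) * (d x y)^2 + t * (d x z)^2 - t * (d y z - t) * d y z
        <= d y z * (d x (g t))^2.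

(** r^s with the conventions 0^0 = 1 and 0^s = 0 for s > 0. *)
Definition rpow (r s : R) : R :=
  if Req_EM_T r 0 then (if Req_EM_T s 0 then 1 else 0) else Rpower r s.

(** Contribution diam(A)^s of a cover element [A], using an upper bound [r] of
    its diameter; the empty set contributes 0. *)
Definition cover_cost {X : Type} (A : X -> Prop) (r s : R) : R :=
  if excluded_middle_informative (exists x, A x) then rpow r s else 0.

Definition hausdorff_null {X : Type} (d : X -> X -> R) (s : R) : Prop :=
  forall delta eps, 0 < delta -> 0 < eps ->
    exists (U : nat -> X -> Prop) (r : nat -> R),
      (forall x, exists i, U i x) /\
      (forall i, 0 <= r i <= delta) /\
      (forall i x y, U i x -> U i y -> d x y <= r i) /\
      exists b, b < eps /\
        forall N, sum_f_R0 (fun i => cover_cost (U i) (r i) s) N <= b.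

Definition is_glb (E : R -> Prop) (m : R) : Prop :=
  (forall x, E x -> m <= x) /\ (forall m', (forall x, E x -> m' <= x) -> m' <= m).

Definition hausdorff_dim {X : Type} (d : X -> X -> R) (n : R) : Prop :=
  is_glb (fun s => 0 <= s /\ hausdorff_null d s) n.

Definition Alex_nonneg {X : Type} (d : X -> X -> R) (n : nat) : Prop :=
  is_metric d /\ complete d /\ geodesic_space d /\ nonneg_curv d /\
  hausdorff_dim d (INR n).

Definition affine_fun {X : Type} (d : X -> X -> R) (f : X -> R) : Prop :=
  forall (g : R -> X) a b, unit_geodesic_on d g a b ->
    exists al be, forall t, a <= t <= b -> f (g t) = al * t + be.

Definition lipschitz_with {X : Type} (d : X -> X -> R) (f : X -> R) (K : R) : Prop :=
  forall x y, Rabs (f x - f y) <= K * d x y.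

Definition opt_lipschitz {X : Type} (d : X -> X -> R) (f : X -> R) (L : R) : Prop :=
  is_glb (fun K => 0 <= K /\ lipschitz_with d f K) L.

Definition unit_line {X : Type} (d : X -> X -> R) (g : R -> X) : Prop :=
  forall s t, d (g s) (g t) = Rabs (s - t).

Definition prod_dist {Z : Type} (dZ : Z -> Z -> R) (p q : Z * R) : R :=
  sqrt ((dZ (fst p) (fst q))^2 + (snd p - snd q)^2).

(* Main.v *)
Require Import Defs.
From Stdlib Require Import Reals Lra Psatz ClassicalDescription ProofIrrelevance ClassicalEpsilon.
Open Scope R_scope.

Lemma Rabs_le_eq (a b : R) : a <= b -> Rabs (a - b) = b - a.
Proof. intros; unfold Rabs; destruct Rcase_abs; lra. Qed.
Lemma Rabs_ge_eq (a b : R) : b <= a -> Rabs (a - b) = a - b.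
Proof. intros; unfold Rabs; destruct Rcase_abs; lra. Qed.

Section Met.
Context {X : Type} (d : X -> X -> R) (HM : is_metric d).
Lemma m_sym x y : d x y = d y x. Proof. destruct HM as (_&_&H&_). apply H. Qed.
Lemma m_pos x y : 0 <= d x y. Proof. destruct HM as (H&_). apply H. Qed.
Lemma m_tri x y z : d x z <= d x y + d y z. Proof. destruct HM as (_&_&_&H). apply H. Qed.
Lemma m_zero x y : d x y = 0 -> x = y. Proof. destruct HM as (_&H&_). apply H. Qed.
Lemma m_refl x : d x x = 0. Proof. destruct HM as (_&H&_). apply H; auto. Qed.
End Met.
Lemma Rabs_le_between (a T : R) : Rabs a <= T -> -T <= a <= T.
Proof. unfold Rabs; destruct Rcase_abs; lra. Qed.
Lemma Rabs_ge_self (a : R) : a <= Rabs a /\ - a <= Rabs a.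
Proof. unfold Rabs; destruct Rcase_abs; lra. Qed.

Section Geo.
Context {X : Type} (d : X -> X -> R) (HM : is_metric d) (HG : geodesic_space d)
  (HN : nonneg_curv d).

Lemma geo_pt x y s : 0 <= s <= d x y -> exists p, d x p = s /\ d p y = d x y - s.
Proof.
  intros Hs. destruct (HG x y) as (g & H0 & H1 & _ & Hu).
  exists (g s). split.
  - assert (E := Hu 0 s ltac:(lra) ltac:(lra)). rewrite H0 in E. rewrite E.
    rewrite Rabs_le_eq; lra.
  - assert (E := Hu s (d x y) ltac:(lra) ltac:(lra)). rewrite H1 in E. rewrite E.
    rewrite Rabs_le_eq; lra.
Qed.

Lemma cmp W B P V :
  d W B + d B P = d W P ->
  d B P * (d V W)^2 + d W B * (d V P)^2 - d W B * d B P * d W P <= d W P * (d V B)^2.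
Proof.
  intros Hb. set (a := d W B) in *. set (b := d B P) in *.
  assert (Ha0 : 0 <= a) by apply (m_pos d HM).
  assert (Hb0 : 0 <= b) by apply (m_pos d HM).
  destruct (HG W B) as (g1 & g10 & g1a & _ & Hu1).
  destruct (HG B P) as (g2 & g20 & g2b & _ & Hu2).
  fold a in g1a, Hu1. fold b in g2b, Hu2.
  set (gam := fun t => if Rle_dec t a then g1 t else g2 (t - a)).
  assert (Ga : gam a = B).
  { unfold gam. destruct (Rle_dec a a); [auto|lra]. }
  assert (G0 : gam 0 = W).
  { unfold gam. destruct (Rle_dec 0 a); [auto|lra]. }
  assert (GL : gam (d W P) = P).
  { unfold gam. destruct (Rle_dec (d W P) a).
    - assert (b = 0) by lra. replace (d W P) with a by lra. rewrite g1a.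
      apply (m_zero d HM). fold b. auto.
    - replace (d W P - a) with b by lra. auto. }
  assert (Mix : forall s t, 0 <= s <= a -> a < t <= a + b -> d (g1 s) (g2 (t - a)) = t - s).
  { intros s t Hs Ht. apply Rle_antisym.
    - eapply Rle_trans. apply (m_tri d HM) with (y := B).
      assert (E1 : d (g1 s) B = a - s). { rewrite <- g1a. rewrite Hu1 by lra. rewrite Rabs_le_eq; lra. }
      assert (E2 : d B (g2 (t - a)) = t - a). { rewrite <- g20 at 1. rewrite Hu2 by lra. rewrite Rabs_le_eq; lra. }
      lra.
    - assert (T1 := m_tri d HM W (g1 s) P).
      assert (T2 := m_tri d HM (g1 s) (g2 (t - a)) P).
      assert (E1 : d W (g1 s) = s). { rewrite <- g10. rewrite Hu1 by lra. rewrite Rabs_le_eq; lra. }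
      assert (E2 : d (g2 (t - a)) P = b - (t - a)). { rewrite <- g2b. rewrite Hu2 by lra. rewrite Rabs_le_eq; lra. }
      lra. }
  assert (UG : unit_geodesic_on d gam 0 (d W P)).
  { split; [lra|]. intros s t Hs Ht. unfold gam.
    destruct (Rle_dec s a); destruct (Rle_dec t a).
    - apply Hu1; lra.
    - rewrite Mix by lra. rewrite Rabs_le_eq; lra.
    - rewrite (m_sym d HM). rewrite Mix by lra. rewrite Rabs_ge_eq; lra.
    - rewrite Hu2 by lra. f_equal. ring. }
  assert (K := HN V W P gam G0 GL UG a ltac:(lra)).
  rewrite Ga in K. replace (d W P - a) with b in K by lra. exact K.
Qed.
End Geo.

Section Key.
Context {X : Type} (d : X -> X -> R) (HM : is_metric d) (HG : geodesic_space d)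
  (HN : nonneg_curv d).

Lemma key W B P V s eta eps :
  d W B + d B P = d W P -> d B P = s -> 0 <= eta -> d V B <= s + eta ->
  0 <= d W P - eps -> d W P - eps <= d V W ->
  (d W P - s) * (d V P)^2 <= d W P * (2*s*eta + eta^2 + 2*s*eps).
Proof.
  intros Hb Hs He HVB H0 HVW.
  assert (K := cmp d HM HG HN W B P V Hb).
  rewrite Hs in K. replace (d W B) with (d W P - s) in K by lra.
  set (L := d W P) in *. set (D := d V P) in *.
  assert (s0 : 0 <= s) by (rewrite <- Hs; apply (m_pos d HM)).
  assert (L0 : 0 <= L) by apply (m_pos d HM).
  assert (VB0 : 0 <= d V B) by apply (m_pos d HM).
  assert (A1 : (L - eps)^2 <= (d V W)^2) by (apply pow_incr; lra).
  assert (A2 : (d V B)^2 <= (s + eta)^2) by (apply pow_incr; lra).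
  assert (A3 : s * (L - eps)^2 <= s * (d V W)^2) by (apply Rmult_le_compat_l; lra).
  assert (A4 : L * (d V B)^2 <= L * (s + eta)^2) by (apply Rmult_le_compat_l; lra).
  assert (A5 : 0 <= s * eps^2) by (apply Rmult_le_pos; [lra| apply pow2_ge_0]).
  nra.
Qed.
End Key.

Section Fwd.
Context {X : Type} (d : X -> X -> R) (HM : is_metric d) (HG : geodesic_space d)
  (HN : nonneg_curv d) (h : X -> R) (Hh : forall x y, h x - h y <= d x y)
  (g : R -> X) (Hg : unit_line d g) (Hhg : forall t, h (g t) = t).

Lemma busA x T : 0 < T ->
  (d x (g (-T)))^2 + (d x (g T))^2 <= 2 * (d x (g 0))^2 + 2 * T^2.
Proof.
  intros HT.
  assert (E1 : d (g (-T)) (g 0) = T) by (rewrite Hg; rewrite Rabs_le_eq; lra).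
  assert (E2 : d (g 0) (g T) = T) by (rewrite Hg; rewrite Rabs_le_eq; lra).
  assert (E3 : d (g (-T)) (g T) = 2 * T) by (rewrite Hg; rewrite Rabs_le_eq; lra).
  assert (K := cmp d HM HG HN (g (-T)) (g 0) (g T) x ltac:(lra)).
  rewrite E1, E2, E3 in K.
  apply Rmult_le_reg_l with T; [lra|]. nra.
Qed.

Lemma lowT x T : T - h x <= d x (g T).
Proof. rewrite (m_sym d HM). specialize (Hh (g T) x). rewrite Hhg in Hh. lra. Qed.
Lemma lowmT x T : T + h x <= d x (g (-T)).
Proof. specialize (Hh x (g (-T))). rewrite Hhg in Hh. lra. Qed.

Lemma f_bound x T eta : 0 < eta -> Rabs (h x) <= T ->
  (d x (g 0))^2 / eta + 1 <= T + h x -> d x (g (-T)) - (T + h x) <= eta.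
Proof.
  intros He HT HT2.
  assert (Hu := Rabs_le_between (h x) T HT). 
  assert (Hq : 0 <= (d x (g 0))^2 / eta) by (unfold Rdiv; apply Rmult_le_pos; [apply pow2_ge_0 | left; apply Rinv_0_lt_compat; lra]).
  assert (T0 : 0 < T) by lra.
  assert (A := busA x T T0).
  assert (L1 := lowT x T). assert (L2 := lowmT x T).
  set (D := d x (g 0)) in *. set (u := h x) in *.
  assert (HD : D^2 = eta * (D^2/eta)) by (field; lra).
  set (q := D^2/eta) in *.
  destruct (Rle_dec (d x (g (-T)) - (T + u)) eta) as [ok|nok]; [exact ok|exfalso].
  assert (Hl : (T - u)^2 <= (d x (g T))^2) by (apply pow_incr; lra).
  set (f := d x (g (-T)) - (T + u)) in *.
  assert (Ef : d x (g (-T)) = T + u + f) by (unfold f; ring).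
  rewrite Ef in A.
  nra.
Qed.

Lemma e_bound x T eta : 0 < eta -> Rabs (h x) <= T ->
  (d x (g 0))^2 / eta + 1 <= T - h x -> d x (g T) - (T - h x) <= eta.
Proof.
  intros He HT HT2.
  assert (Hu := Rabs_le_between (h x) T HT). 
  assert (Hq : 0 <= (d x (g 0))^2 / eta) by (unfold Rdiv; apply Rmult_le_pos; [apply pow2_ge_0 | left; apply Rinv_0_lt_compat; lra]).
  assert (T0 : 0 < T) by lra.
  assert (A := busA x T T0).
  assert (L1 := lowT x T). assert (L2 := lowmT x T).
  set (D := d x (g 0)) in *. set (u := h x) in *.
  assert (HD : D^2 = eta * (D^2/eta)) by (field; lra).
  set (q := D^2/eta) in *.
  destruct (Rle_dec (d x (g T) - (T - u)) eta) as [ok|nok]; [exact ok|exfalso].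
  assert (Hl : (T + u)^2 <= (d x (g (-T)))^2) by (apply pow_incr; lra).
  set (f := d x (g T) - (T - u)) in *.
  assert (Ef : d x (g T) = T - u + f) by (unfold f; ring).
  rewrite Ef in A.
  nra.
Qed.


Definition good x s eta p := exists T, d x p = s /\ d p (g T) = d x (g T) - s /\
  d x (g T) - (T - h x) <= eta /\ 2 * s <= T - h x.

Lemma good_mono x s e1 e2 p : e1 <= e2 -> good x s e1 p -> good x s e2 p.
Proof. intros He (T & A & B' & C' & D'). exists T; repeat split; auto; lra. Qed.

Lemma good_h x s eta p : good x s eta p -> h x + s - eta <= h p.
Proof.
  intros (T & A & B' & C' & D').
  assert (K := Hh (g T) p). rewrite Hhg in K. rewrite (m_sym d HM (g T) p) in K. lra.
Qed.

Lemma AP x s eta : 0 <= s -> 0 < eta -> exists p, good x s eta p.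
Proof.
  intros Hs He.
  assert (Hq : 0 <= (d x (g 0))^2 / eta) by (unfold Rdiv; apply Rmult_le_pos; [apply pow2_ge_0 | left; apply Rinv_0_lt_compat; lra]).
  assert (Ha := Rabs_ge_self (h x)).
  set (T := Rabs (h x) + 2 * s + (d x (g 0))^2 / eta + 1).
  assert (E := e_bound x T eta He ltac:(unfold T; lra) ltac:(unfold T; lra)).
  assert (L := lowT x T).
  destruct (geo_pt d HG x (g T) s ltac:(unfold T in *; lra)) as (p & P1 & P2).
  exists p, T. repeat split; auto. unfold T; lra.
Qed.

Lemma CL x s eta p q : 0 < s -> 0 < eta -> eta <= s -> good x s eta p -> good x s eta q ->
  exists del, 0 <= del /\ del^2 <= 8 * s * eta /\
    (d p q)^2 <= 2 * (2 * s * del + del^2 + 4 * s * eta).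
Proof.
  intros Hs He Hes Gp Gq.
  assert (hp := good_h _ _ _ _ Gp). assert (hq := good_h _ _ _ _ Gq).
  destruct Gp as (T & Hp1 & Hp2 & Hpe & HpT).
  destruct Gq as (T' & Hq1 & Hq2 & Hqe & HqT).
  assert (Hqq : 0 <= (d x (g 0))^2 / eta) by (unfold Rdiv; apply Rmult_le_pos; [apply pow2_ge_0 | left; apply Rinv_0_lt_compat; lra]).
  assert (Ha := Rabs_ge_self (h x)).
  set (T2 := Rabs (h x) + 3 * s + (d x (g 0))^2 / eta + 1).
  assert (Fb := f_bound x T2 eta He ltac:(unfold T2; lra) ltac:(unfold T2; lra)).
  assert (Fl := lowmT x T2).
  set (W := g (-T2)) in *.
  assert (hW : h W = - T2) by (unfold W; apply Hhg).
  set (f := d x W - (T2 + h x)) in *.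
  set (lam := d W p).
  assert (lam_up : lam <= T2 + h x + f + s).
  { unfold lam. eapply Rle_trans. apply (m_tri d HM) with (y := x).
    rewrite (m_sym d HM W x). unfold f. lra. }
  assert (lam_lo : h p + T2 <= lam).
  { unfold lam. rewrite (m_sym d HM). assert (K := Hh p W). lra. }
  destruct (geo_pt d HG W p (lam - s) ltac:(unfold T2 in *; unfold lam in *; split; lra)) as (m & M1 & M2).
  fold lam in M1, M2. replace (lam - (lam - s)) with s in M2 by ring.
  assert (hm : h m <= h x + f).
  { assert (K := Hh m W).
    rewrite (m_sym d HM m W) in K. lra. }
  set (l := d x (g T)) in *.
  assert (lT := lowT x T). fold l in lT.
  assert (S2 := key d HM HG HN (g T) p x m s 0 ((l - (T - h x)) + f)).
  rewrite (m_sym d HM (g T) p), (m_sym d HM p x), (m_sym d HM (g T) x) in S2. fold l in S2.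
  assert (S2' : (l - s) * (d m x)^2 <= l * (2 * s * 0 + 0^2 + 2 * s * ((l - (T - h x)) + f))).
  { apply S2; try lra.
    assert (K := Hh (g T) m). rewrite Hhg in K. rewrite (m_sym d HM (g T) m) in K. lra. }
  clear S2.
  set (del := d x m).
  assert (del0 : 0 <= del) by apply (m_pos d HM).
  rewrite (m_sym d HM m x) in S2'. fold del in S2'.
  assert (Hdel : del^2 <= 8 * s * eta).
  { assert (F0 : 0 <= f) by (unfold f; lra).
    assert (Y1 : l * (2 * s * 0 + 0^2 + 2 * s * ((l - (T - h x)) + f)) <= l * (2 * s * (2 * eta))).
    { apply Rmult_le_compat_l. lra. nra. }
    assert (Y2 : l * (2 * s * (2 * eta)) <= (l - s) * (8 * s * eta)).
    { assert (0 <= (l - 2*s) * (s*eta)) by (apply Rmult_le_pos; nra). nra. }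
    assert (Z1 : (l - s) * del^2 <= (l - s) * (8 * s * eta)) by lra.
    apply Rmult_le_reg_l in Z1; lra. }
  exists del. split; [exact del0|]. split; [exact Hdel|].
  assert (S1 := key d HM HG HN W m p q s del ((d x (g T') - (T' - h x)) + f)).
  fold lam in S1.
  assert (S1' : (lam - s) * (d q p)^2 <= lam * (2 * s * del + del^2 + 2 * s * ((d x (g T') - (T' - h x)) + f))).
  { assert (lT' := lowT x T').
    apply S1; try lra.
    - eapply Rle_trans. apply (m_tri d HM) with (y := x). rewrite (m_sym d HM q x). fold del. lra.
    - unfold T2 in *; lra.
    - assert (K := Hh q W).
      assert (K2 := Hh (g T') q). rewrite Hhg in K2. rewrite (m_sym d HM (g T') q) in K2. lra. }
  clear S1. rewrite (m_sym d HM q p) in S1'.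
  assert (lT' := lowT x T').
  set (Q := 2 * s * del + del^2 + 4 * s * eta) in *.
  assert (Q0 : 0 <= Q) by (unfold Q; nra).
  assert (Z1 : (lam - s) * (d p q)^2 <= lam * Q).
  { eapply Rle_trans. exact S1'. apply Rmult_le_compat_l. unfold T2 in *; lra. unfold Q; nra. }
  assert (Z2 : (lam - s) * (d p q)^2 <= (lam - s) * (2 * Q)) by (unfold T2 in *; nra).
  apply Rmult_le_reg_l in Z2; [lra|]. unfold T2 in *; lra.
Qed.

End Fwd.

Lemma le_div_mul a b c : 0 < c -> a <= b / c -> c * a <= b.
Proof. intros Hc H. replace b with (c * (b / c)) by (field; lra). apply Rmult_le_compat_l; lra. Qed.

Lemma eta_small s et : 0 < s -> 0 < et -> exists N, forall k, (N <= k)%nat -> s / (INR k + 1) <= et.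
Proof.
  intros Hs He. destruct (INR_archimed et s He) as [N HN]. exists N. intros k Hk.
  apply le_INR in Hk. assert (0 <= INR N) by apply pos_INR.
  assert (E : s / (INR k + 1) * (INR k + 1) = s) by (field; lra).
  assert (0 < s / (INR k + 1)) by (apply Rdiv_lt_0_compat; lra).
  nra.
Qed.

Section Fwd2.
Context {X : Type} (d : X -> X -> R) (HM : is_metric d) (HC : complete d) (HG : geodesic_space d)
  (HN : nonneg_curv d) (h : X -> R) (Hh : forall x y, h x - h y <= d x y)
  (g : R -> X) (Hg : unit_line d g) (Hhg : forall t, h (g t) = t).

Lemma fwd_exists x s : 0 <= s -> exists p, d x p = s /\ h p = h x + s.
Proof.
  intros Hs0. destruct (Req_dec s 0) as [E0|Hs1].
  { exists x. split. rewrite (m_refl d HM). auto. lra. }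
  assert (Hs : 0 < s) by lra. clear Hs0 Hs1.
  set (eta := fun k : nat => s / (INR k + 1)).
  assert (eta_pos : forall k, 0 < eta k).
  { intro k. unfold eta. apply Rdiv_lt_0_compat; [lra|]. assert (0 <= INR k) by apply pos_INR. lra. }
  assert (eta_le : forall k, eta k <= s).
  { intro k. unfold eta. assert (0 <= INR k) by apply pos_INR.
    assert (E : s / (INR k + 1) * (INR k + 1) = s) by (field; lra).
    assert (0 < s / (INR k + 1)) by (apply Rdiv_lt_0_compat; lra). nra. }
  assert (Hch : forall k, {p | good d h g x s (eta k) p}).
  { intro k. apply constructive_indefinite_description. apply (AP d HM HG HN h Hh g Hg Hhg); [lra|apply eta_pos]. }
  set (ps := fun k => proj1_sig (Hch k)).
  assert (Hps : forall k, good d h g x s (eta k) (ps k)) by (intro k; exact (proj2_sig (Hch k))).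
  assert (Cau : cauchy_seq d ps).
  { intros ep Hep.
    set (r := Rmin 1 (ep^2 / (8 * (2 * s + 1)))).
    assert (r0 : 0 < r).
    { unfold r. apply Rmin_glb_lt; [lra|]. apply Rdiv_lt_0_compat; nra. }
    assert (r1 : r <= 1) by apply Rmin_l.
    assert (r2 : 8 * (2 * s + 1) * r <= ep^2) by (apply le_div_mul; [lra|apply Rmin_r]).
    set (et := Rmin s (Rmin (r^2 / (8 * s)) (ep^2 / (32 * s)))).
    assert (et0 : 0 < et).
    { unfold et. apply Rmin_glb_lt; [lra|]. apply Rmin_glb_lt; apply Rdiv_lt_0_compat; nra. }
    assert (et1 : et <= s) by apply Rmin_l.
    assert (et2 : 8 * s * et <= r^2).
    { apply le_div_mul; [lra|]. eapply Rle_trans. apply Rmin_r. apply Rmin_l. }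
    assert (et3 : 32 * s * et <= ep^2).
    { apply le_div_mul; [lra|]. eapply Rle_trans. apply Rmin_r. apply Rmin_r. }
    destruct (eta_small s et Hs et0) as [N HN'].
    exists N. intros m k Hm Hk.
    assert (Gm := good_mono d h g x s _ _ _ (HN' m Hm) (Hps m)).
    assert (Gk := good_mono d h g x s _ _ _ (HN' k Hk) (Hps k)).
    destruct (CL d HM HG HN h Hh g Hg Hhg x s et (ps m) (ps k) Hs et0 et1 Gm Gk)
      as (del & D0 & D1 & D2).
    assert (Dr : del <= r) by nra.
    assert (DD : (d (ps m) (ps k))^2 < ep^2) by nra.
    assert (0 <= d (ps m) (ps k)) by apply (m_pos d HM).
    nra. }
  destruct (HC ps Cau) as [l Hl].
  exists l. split.
  - destruct (Req_dec (d x l) s) as [ok|nok]; [exact ok|exfalso].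
    assert (Hep : 0 < Rabs (d x l - s)) by (apply Rabs_pos_lt; lra).
    destruct (Hl _ Hep) as [N HN'].
    specialize (HN' N (le_n N)).
    destruct (Hps N) as (T & P1 & _).
    assert (T1 := m_tri d HM x (ps N) l).
    assert (T2 := m_tri d HM x l (ps N)).
    rewrite (m_sym d HM l (ps N)) in T2.
    unfold Rabs in *; destruct Rcase_abs; lra.
  - assert (up := Hh l x). rewrite (m_sym d HM l x) in up.
    destruct (Rle_dec (h x + s) (h l)) as [ok|nok].
    + assert (d x l = s).
      { destruct (Req_dec (d x l) s) as [ok2|nok2]; [exact ok2|exfalso].
        assert (Hep : 0 < Rabs (d x l - s)) by (apply Rabs_pos_lt; lra).
        destruct (Hl _ Hep) as [N HN'].
        specialize (HN' N (le_n N)).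
        destruct (Hps N) as (T & P1 & _).
        assert (T1 := m_tri d HM x (ps N) l).
        assert (T2 := m_tri d HM x l (ps N)).
        rewrite (m_sym d HM l (ps N)) in T2.
        unfold Rabs in *; destruct Rcase_abs; lra. }
      lra.
    + exfalso. set (ep := (h x + s - h l) / 2).
      assert (Hep : 0 < ep) by (unfold ep; lra).
      destruct (Hl _ Hep) as [N1 HN1].
      destruct (eta_small s ep Hs Hep) as [N2 HN2].
      set (k := max N1 N2).
      assert (K1 := HN1 k (Nat.le_max_l _ _)).
      assert (K2 := HN2 k (Nat.le_max_r _ _)).
      assert (K3 := good_h d HM h Hh g Hhg x s _ _ (Hps k)).
      assert (K4 := Hh (ps k) l).
      fold (eta k) in K2. unfold ep in *. lra.
Qed.
End Fwd2.

Lemma LIM a b c T0 : (forall T, T0 <= T -> T * a <= T * b + c) -> a <= b.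
Proof.
  intros H. destruct (Rle_dec a b) as [ok|nok]; [exact ok|exfalso].
  assert (Hab : 0 < a - b) by lra.
  set (T := Rmax T0 (Rmax 1 (Rabs c / (a - b) + 1))).
  assert (T1 : T0 <= T) by apply Rmax_l.
  assert (T2 : Rabs c / (a - b) + 1 <= T).
  { eapply Rle_trans; [|apply Rmax_r]. apply Rmax_r. }
  assert (E : (a - b) * (Rabs c / (a - b)) = Rabs c) by (field; lra).
  assert (Hc := Rabs_ge_self c).
  specialize (H T T1). nra.
Qed.

Section Lines.
Context {X : Type} (d : X -> X -> R) (HM : is_metric d) (HG : geodesic_space d)
  (HN : nonneg_curv d) (h : X -> R) (Hh : forall x y, h x - h y <= d x y).

Lemma ul_dist (l : R -> X) a b : unit_line d l -> a <= b -> d (l a) (l b) = b - a.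
Proof. intros Hl Hab. rewrite Hl. apply Rabs_le_eq; auto. Qed.

Lemma pyth_pos (l : R -> X) x y s : unit_line d l -> l 0 = x -> (forall t, h (l t) = h x + t) ->
  0 <= s -> (d y (l s))^2 = (d x y)^2 + 2 * s * (h x - h y) + s^2.
Proof.
  intros Hl H0 Hhl Hs.
  set (k := h x - h y). set (D := d x y).
  assert (Dk : k <= D) by (unfold k, D; apply Hh).
  assert (Dk2 : - k <= D) by (unfold k, D; rewrite (m_sym d HM); specialize (Hh y x); lra).
  assert (D0 : 0 <= D) by apply (m_pos d HM).
  assert (Dkk : k^2 <= D^2) by nra.
  set (Xs := d y (l s)).
  apply Rle_antisym.
  - apply (LIM _ _ (s * (D^2 - k^2)) (Rabs k + 1)). intros T HT.
    assert (Hk := Rabs_ge_self k).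
    assert (K := cmp d HM HG HN (l (-T)) (l 0) (l s) y).
    rewrite (ul_dist l (-T) 0), (ul_dist l 0 s), (ul_dist l (-T) s) in K; auto; try lra.
    specialize (K ltac:(lra)). rewrite H0 in K.
    rewrite (m_sym d HM y x) in K. fold D in K. fold Xs in K.
    assert (Y : T - k <= d y (l (-T))).
    { specialize (Hh y (l (-T))). rewrite Hhl in Hh. unfold k. lra. }
    assert (Y2 : (T - k)^2 <= (d y (l (-T)))^2) by (apply pow_incr; lra).
    assert (Y3 : s * (T - k)^2 <= s * (d y (l (-T)))^2) by (apply Rmult_le_compat_l; lra).
    replace (0 - - T) with T in K by ring. replace (s - - T) with (T + s) in K by ring.
    replace (s - 0) with s in K by ring.
    nra.
  - apply (LIM _ _ (s * (D^2 - k^2)) (s + Rabs k + 1)). intros T HT.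
    assert (Hk := Rabs_ge_self k).
    assert (K := cmp d HM HG HN (l 0) (l s) (l T) y).
    rewrite (ul_dist l 0 s), (ul_dist l s T), (ul_dist l 0 T) in K; auto; try lra.
    specialize (K ltac:(lra)). rewrite H0 in K.
    rewrite (m_sym d HM y x) in K. fold D in K. fold Xs in K.
    assert (Y : k + T <= d y (l T)).
    { specialize (Hh (l T) y). rewrite Hhl in Hh. rewrite (m_sym d HM) in Hh. unfold k. lra. }
    assert (Y2 : (k + T)^2 <= (d y (l T))^2) by (apply pow_incr; lra).
    assert (Y3 : s * (k + T)^2 <= s * (d y (l T))^2) by (apply Rmult_le_compat_l; lra).
    replace (T - 0) with T in K by ring. replace (s - 0) with s in K by ring.
    nra.
Qed.

Context (HC : complete d) (g : R -> X) (Hg : unit_line d g) (Hhg : forall t, h (g t) = t).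

Lemma neg_lip : forall x y, (fun z => - h z) x - (fun z => - h z) y <= d x y.
Proof. intros x y. simpl. rewrite (m_sym d HM). specialize (Hh y x). lra. Qed.
Lemma neg_line : unit_line d (fun t => g (- t)).
Proof. intros s t. rewrite Hg. replace (- s - - t) with (- (s - t)) by ring. apply Rabs_Ropp. Qed.
Lemma neg_hg : forall t, (fun z => - h z) ((fun t => g (- t)) t) = t.
Proof. intros t. simpl. rewrite Hhg. ring. Qed.

Lemma bwd_exists x s : 0 <= s -> exists p, d x p = s /\ h p = h x - s.
Proof.
  intros Hs. destruct (fwd_exists d HM HC HG HN _ neg_lip _ neg_line neg_hg x s Hs) as (p & P1 & P2).
  exists p. split; auto. lra.
Qed.

Lemma uniq x s p q : 0 <= s -> d x p = s -> d x q = s -> h p = h x + s -> h q = h x + s -> p = q.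
Proof.
  intros Hs Hp Hq hp hq.
  destruct (bwd_exists x 1 ltac:(lra)) as (W & W1 & W2).
  assert (Bt : d W x + d x p = d W p).
  { apply Rle_antisym; [|apply (m_tri d HM)].
    specialize (Hh p W). rewrite (m_sym d HM p W) in Hh. rewrite (m_sym d HM W x). lra. }
  assert (K := key d HM HG HN W x p q s 0 0 Bt Hp ltac:(lra)).
  assert (Hqx : d q x <= s + 0) by (rewrite (m_sym d HM); lra).
  assert (Hq2 := Hh q W).
  assert (dWp : d W p = 1 + s) by (rewrite (m_sym d HM W x) in Bt; lra).
  specialize (K Hqx ltac:(lra) ltac:(lra)).
  rewrite dWp in K.
  assert (0 <= d q p) by apply (m_pos d HM).
  apply (m_zero d HM). rewrite (m_sym d HM). nra.
Qed.

Lemma ray x s t p q : 0 <= s <= t -> d x p = s -> h p = h x + s -> d x q = t -> h q = h x + t ->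
  d p q = t - s.
Proof.
  intros Hst Hp hp Hq hq.
  destruct (fwd_exists d HM HC HG HN h Hh g Hg Hhg p (t - s) ltac:(lra)) as (r & R1 & R2).
  assert (Hxr : d x r = t).
  { apply Rle_antisym. eapply Rle_trans. apply (m_tri d HM) with (y := p). lra.
    specialize (Hh r x). rewrite (m_sym d HM) in Hh. lra. }
  assert (r = q) by (apply (uniq x t); auto; lra).
  subst r. auto.
Qed.
End Lines.

Section Lines2.
Context {X : Type} (d : X -> X -> R) (HM : is_metric d) (HC : complete d) (HG : geodesic_space d)
  (HN : nonneg_curv d) (h : X -> R) (Hh : forall x y, h x - h y <= d x y)
  (g : R -> X) (Hg : unit_line d g) (Hhg : forall t, h (g t) = t).

Lemma uniqN x s p q : 0 <= s -> d x p = s -> d x q = s -> h p = h x - s -> h q = h x - s -> p = q.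
Proof.
  intros. apply (uniq d HM HG HN (fun z => - h z) (neg_lip d HM h Hh) HC (fun t => g (- t))
    (neg_line d g Hg) (neg_hg h g Hhg) x s); auto; lra.
Qed.

Lemma rayN x s t p q : 0 <= s <= t -> d x p = s -> h p = h x - s -> d x q = t -> h q = h x - t ->
  d p q = t - s.
Proof.
  intros. apply (ray d HM HG HN (fun z => - h z) (neg_lip d HM h Hh) HC (fun t => g (- t))
    (neg_line d g Hg) (neg_hg h g Hhg) x); auto; lra.
Qed.

Lemma pyth (l : R -> X) x y s : unit_line d l -> l 0 = x -> (forall t, h (l t) = h x + t) ->
  (d y (l s))^2 = (d x y)^2 + 2 * s * (h x - h y) + s^2.
Proof.
  intros Hl H0 Hhl. destruct (Rle_dec 0 s) as [Hs|Hs].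
  - apply (pyth_pos d HM HG HN h Hh); auto.
  - assert (K := pyth_pos d HM HG HN (fun z => - h z) (neg_lip d HM h Hh) (fun t => l (- t)) x y (- s)).
    cbv beta in K. rewrite Ropp_involutive in K. rewrite K.
    + ring.
    + intros a b. rewrite Hl. replace (- a - - b) with (- (a - b)) by ring. apply Rabs_Ropp.
    + rewrite Ropp_0. auto.
    + intros t. rewrite Hhl. ring.
    + lra.
Qed.

Lemma line_exists x : exists l : R -> X, l 0 = x /\ unit_line d l /\ forall t, h (l t) = h x + t.
Proof.
  assert (H : forall t, exists p, d x p = Rabs t /\ h p = h x + t).
  { intro t. destruct (Rle_dec 0 t).
    - destruct (fwd_exists d HM HC HG HN h Hh g Hg Hhg x t r) as (p & P1 & P2).
      exists p. rewrite Rabs_pos_eq; auto.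
    - destruct (bwd_exists d HM HG HN h Hh HC g Hg Hhg x (- t) ltac:(lra)) as (p & P1 & P2).
      exists p. rewrite Rabs_left; [|lra]. split; auto. lra. }
  set (l := fun t => proj1_sig (constructive_indefinite_description _ (H t))).
  assert (Hl : forall t, d x (l t) = Rabs t /\ h (l t) = h x + t)
    by (intro t; exact (proj2_sig (constructive_indefinite_description _ (H t)))).
  assert (aux : forall s t, s <= t -> d (l s) (l t) = t - s).
  { intros s t Hst. destruct (Hl s) as (S1 & S2). destruct (Hl t) as (T1 & T2).
    destruct (Rle_dec 0 s).
    - rewrite Rabs_pos_eq in S1, T1 by lra. apply (ray d HM HG HN h Hh HC g Hg Hhg x); auto; lra.
    - destruct (Rle_dec t 0).
      + rewrite Rabs_left in S1 by lra. rewrite Rabs_left1 in T1 by lra.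
        rewrite (m_sym d HM). replace (t - s) with (- s - - t) by ring.
        apply (rayN x); auto; lra.
      + rewrite Rabs_left in S1 by lra. rewrite Rabs_pos_eq in T1 by lra.
        apply Rle_antisym.
        * eapply Rle_trans. apply (m_tri d HM) with (y := x). rewrite (m_sym d HM). lra.
        * specialize (Hh (l t) (l s)). rewrite (m_sym d HM) in Hh. lra. }
  exists l. split; [|split].
  - symmetry. apply (m_zero d HM). destruct (Hl 0) as (A1 & _). rewrite A1. apply Rabs_R0.
  - intros s t. destruct (Rle_dec s t).
    + rewrite aux by auto. rewrite Rabs_le_eq; auto.
    + rewrite (m_sym d HM). rewrite aux by lra. rewrite Rabs_ge_eq; lra.
  - intro t. apply Hl.
Qed.

Lemma line_uniq (l1 l2 : R -> X) y : l1 0 = y -> l2 0 = y -> unit_line d l1 -> unit_line d l2 ->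
  (forall t, h (l1 t) = h y + t) -> (forall t, h (l2 t) = h y + t) -> forall t, l1 t = l2 t.
Proof.
  intros A1 A2 U1 U2 H1 H2 t.
  assert (E1 : d y (l1 t) = Rabs t) by (rewrite <- A1 at 1; rewrite U1; rewrite Rabs_minus_sym; f_equal; ring).
  assert (E2 : d y (l2 t) = Rabs t) by (rewrite <- A2 at 1; rewrite U2; rewrite Rabs_minus_sym; f_equal; ring).
  destruct (Rle_dec 0 t).
  - rewrite Rabs_pos_eq in E1, E2 by lra. apply (uniq d HM HG HN h Hh HC g Hg Hhg y t); auto.
  - rewrite Rabs_left in E1, E2 by lra. apply (uniqN y (- t)); auto; try lra.
    rewrite H1; ring. rewrite H2; ring.
Qed.
End Lines2.

Lemma opt_lip {X : Type} (d : X -> X -> R) (HM : is_metric d) f L :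
  opt_lipschitz d f L -> forall x y, Rabs (f x - f y) <= L * d x y.
Proof.
  intros (lb & glb) x y.
  destruct (Rle_dec (Rabs (f x - f y)) (L * d x y)) as [ok|nok]; [exact ok|exfalso].
  assert (D0 := m_pos d HM x y).
  destruct (Req_dec (d x y) 0) as [Z|Z].
  { apply (m_zero d HM) in Z. subst y. rewrite Rminus_diag, Rabs_R0, (m_refl d HM) in nok. lra. }
  set (K0 := Rabs (f x - f y) / d x y).
  assert (EK : K0 * d x y = Rabs (f x - f y)) by (unfold K0; field; lra).
  assert (HK : K0 <= L).
  { apply glb. intros K (K1 & K2). specialize (K2 x y).
    destruct (Rle_dec K0 K) as [o|n]; [exact o|exfalso]. nra. }
  nra.
Qed.

Lemma deriv_lin (k : R -> R) L : (forall t, derivable_pt_lim k t L) -> forall t, k t = L * t + k 0.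
Proof.
  intros Hk.
  set (q := fun s => k s - L * s).
  assert (Hq : forall t, derivable_pt_lim q t 0).
  { intro t. replace 0 with (L - L * 1) by ring.
    apply (derivable_pt_lim_minus k (fun s => L * s)). apply Hk.
    apply (derivable_pt_lim_scal id L t 1). apply derivable_pt_lim_id. }
  set (pr := fun t => exist (fun l => derivable_pt_lim q t l) 0 (Hq t) : derivable_pt q t).
  assert (C := null_derivative_1 q pr (fun t => eq_refl)).
  intro t. specialize (C t 0). unfold q in C. lra.
Qed.

Theorem lemma4p1 (X : Type) (d : X -> X -> R) (n : nat) (f : X -> R) (L : R) :
  Alex_nonneg d n ->
  (exists K, lipschitz_with d f K) ->
  affine_fun d f ->
  opt_lipschitz d f L ->
  (exists g : R -> X, unit_line d g /\ 0 < L /\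
     forall t, derivable_pt_lim (fun s => f (g s)) t L) ->
  exists (Z : Type) (dZ : Z -> Z -> R) (Phi : X -> Z * R),
    is_metric dZ /\
    (forall x y, exists w, Phi w = (x, y)) /\
    (forall x y, prod_dist dZ (Phi x) (Phi y) = d x y) /\
    (forall x, f x = L * snd (Phi x)).
Proof.
  intros (HM & HC & HG & HN & _) _ _ Hopt (g0 & Hg0 & HL & Hder).
  assert (Lip := opt_lip d HM f L Hopt).
  assert (Lin := deriv_lin (fun s => f (g0 s)) L Hder). cbv beta in Lin.
  set (h := fun x => f x / L).
  set (c := f (g0 0) / L).
  set (g := fun t => g0 (t - c)).
  assert (Hh : forall x y, h x - h y <= d x y).
  { intros x y. unfold h. specialize (Lip x y). assert (Ha := Rabs_ge_self (f x - f y)).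
    apply (Rmult_le_reg_l L); [lra|].
    replace (L * (f x / L - f y / L)) with (f x - f y) by (field; lra). lra. }
  assert (Hg : unit_line d g). { intros s t. unfold g. rewrite Hg0. f_equal. ring. }
  assert (Hhg : forall t, h (g t) = t). { intro t. unfold h, g, c. rewrite Lin. field. lra. }
  assert (Hch : forall x, {l : R -> X | l 0 = x /\ unit_line d l /\ forall t, h (l t) = h x + t}).
  { intro x. apply constructive_indefinite_description. apply (line_exists d HM HC HG HN h Hh g Hg Hhg). }
  set (Ln := fun x => proj1_sig (Hch x)).
  assert (HLn : forall x, Ln x 0 = x /\ unit_line d (Ln x) /\ forall t, h (Ln x t) = h x + t)
    by (intro x; exact (proj2_sig (Hch x))).
  assert (Shift : forall y r t, Ln (Ln y r) t = Ln y (r + t)).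
  { intros y r. destruct (HLn y) as (A1 & A2 & A3). destruct (HLn (Ln y r)) as (B1 & B2 & B3).
    apply (line_uniq d HM HC HG HN h Hh g Hg Hhg (Ln (Ln y r)) (fun t => Ln y (r + t)) (Ln y r)); auto.
    - cbv beta. rewrite Rplus_0_r. auto.
    - intros a b. cbv beta. rewrite A2. f_equal. ring.
    - intro t. cbv beta. rewrite !A3. ring. }
  set (pi := fun x => Ln x (- h x)).
  assert (hpi : forall x, h (pi x) = 0).
  { intro x. unfold pi. destruct (HLn x) as (_&_&A3). rewrite A3. ring. }
  set (Z := {z : X | h z = 0}).
  set (dZ := fun z w : Z => d (proj1_sig z) (proj1_sig w)).
  set (Phi := fun x => (exist (fun z => h z = 0) (pi x) (hpi x) : Z, h x)).
  exists Z, dZ, Phi.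
  split; [|split; [|split]].
  - destruct HM as (M1 & M2 & M3 & M4).
    split; [|split; [|split]]; intros; unfold dZ; auto.
    split.
    + intro E. destruct x as [x hx], y as [y hy]. simpl in E. apply M2 in E. subst y.
      f_equal. apply proof_irrelevance.
    + intro E. subst. apply M2. auto.
  - intros [z hz] t. exists (Ln z t). unfold Phi.
    destruct (HLn z) as (A1 & A2 & A3).
    assert (E1 : h (Ln z t) = t) by (rewrite A3, hz; ring).
    assert (E2 : pi (Ln z t) = z).
    { unfold pi. rewrite E1, Shift. rewrite Rplus_opp_r. auto. }
    f_equal.
    + apply subset_eq_compat. exact E2.
    + exact E1.
  - intros x y. unfold prod_dist, Phi, dZ. cbn [fst snd proj1_sig].
    set (z := pi x). set (w := pi y).
    assert (Ex : Ln z (h x) = x).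
    { unfold z, pi. rewrite Shift. rewrite Rplus_opp_l. apply HLn. }
    assert (Ey : Ln w (h y) = y).
    { unfold w, pi. rewrite Shift. rewrite Rplus_opp_l. apply HLn. }
    destruct (HLn z) as (Z1 & Z2 & Z3). destruct (HLn w) as (W1 & W2 & W3).
    assert (P1 := pyth d HM HG HN h Hh (Ln z) z y (h x) Z2 Z1 Z3).
    assert (P2 := pyth d HM HG HN h Hh (Ln w) w z (h y) W2 W1 W3).
    rewrite Ex in P1. rewrite Ey in P2.
    assert (hz : h z = 0) by apply hpi. assert (hw : h w = 0) by apply hpi.
    rewrite hz in P1. rewrite hz, hw in P2.
    rewrite (m_sym d HM w z) in P2.
    rewrite <- (sqrt_pow2 (d x y) (m_pos d HM x y)). f_equal.
    rewrite (m_sym d HM x y). rewrite P1, P2. ring.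
  - intro x. unfold Phi, h. cbn [fst snd]. field. lra.
Qed.
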